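(* For every even $n\geq1$, the variety $Y_{\mathbb{A}_n}$ is isomorphic to $X_n(1)\times(\mathbb{A}^1\setminus\{0\})$.
   Context: For $\alpha$ invertible, $X_n(\alpha)$ is the affine variety in variables $x_1,\dots,x_n,x'_1,\dots,x'_n$ defined by $x_1x'_1=1+\alpha x_2$, $x_ix'_i=1+x_{i-1}x_{i+1}$ for $2\le i\le n-1$, $x_nx'_n=1+x_{n-1}$. $Y_{\mathbb{A}_n}$ is the variety in variables $(\alpha,x_1,\dots,x_n,x'_1,\dots,x'_n)$ with $\alpha\neq0$ defined by the same equations (the union of the $X_n(\alpha)$ over invertible $\alpha$). *)

(* Defs.v *)
From HB Require Import structures.
From mathcomp Require Import all_boot all_order all_algebra.
From mathcomp Require Import mpoly.
Set Implicit Arguments. Unset Strict Implicit. Unset Printing Implicit Defensive.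
Import GRing.Theory.
Local Open Scope ring_scope.

Section Varieties.
Variable k : closedFieldType.
Variable n : nat.

(* A point of the ambient space k^(2n+1): (u, (x, x')) where u is the
   distinguished coordinate that is required to be invertible
   (u = alpha for Y_{A_n}, u = t for the factor A^1 \ {0} of X_n(1) x (A^1\{0})),
   x = (x_1,...,x_n) and x' = (x'_1,...,x'_n) stored 0-based: x_i = x`_(i-1). *)
Definition pt := (k * (n.-tuple k * n.-tuple k))%type.

Definition eqsX (al : k) (x x' : n.-tuple k) : Prop :=
  [/\ x`_0 * x'`_0 = 1 + al * x`_1,
      (forall i : nat, (1 <= i)%N -> (i.+1 < n)%N ->
         x`_i * x'`_i = 1 + x`_i.-1 * x`_i.+1)
    & x`_n.-1 * x'`_n.-1 = 1 + x`_n.-2].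

Definition Y_An (p : pt) : Prop := p.1 != 0 /\ eqsX p.1 p.2.1 p.2.2.

Definition X1_Gm (p : pt) : Prop := p.1 != 0 /\ eqsX 1 p.2.1 p.2.2.

(* Regular functions on a locally closed set {u <> 0} are polynomials in
   u^-1, u, x, x'.  Coordinate vector (u^-1, u, x_1..x_n, x'_1..x'_n). *)
Definition coordv (p : pt) : 'I_(2 * n).+2 -> k := fun i =>
  if (i == 0 :> nat) then p.1^-1
  else if (i == 1 :> nat) then p.1
  else if (i < n.+2)%N then p.2.1`_(i - 2)
  else p.2.2`_(i - n.+2).

Definition lmap := ({mpoly k[(2 * n).+2]} *
  (n.-tuple {mpoly k[(2 * n).+2]} * n.-tuple {mpoly k[(2 * n).+2]}))%type.

Definition app (f : lmap) (p : pt) : pt :=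
  (f.1.@[coordv p],
   ([tuple of map (fun q : {mpoly k[(2 * n).+2]} => q.@[coordv p]) f.2.1],
    [tuple of map (fun q : {mpoly k[(2 * n).+2]} => q.@[coordv p]) f.2.2])).

Definition var_iso (A B : pt -> Prop) : Prop :=
  exists f g : lmap,
    [/\ (forall p, A p -> B (app f p)),
        (forall q, B q -> A (app g q)),
        (forall p, A p -> app g (app f p) = p)
      & (forall q, B q -> app f (app g q) = q)].

End Varieties.

(* Main.v *)
Require Import Defs.
From mathcomp Require Import all_boot all_order all_algebra.
From mathcomp Require Import mpoly zify.
Set Implicit Arguments. Unset Strict Implicit. Unset Printing Implicit Defensive.
Import GRing.Theory.
Local Open Scope ring_scope.

Definition sc (k : fieldType) (s : int) (al : k) : k :=
  if s == 1 then al^-1 else if s == -1 then al else 1.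

Lemma scN (k : fieldType) (s : int) (al : k) : al != 0 -> sc s al * sc (- s) al = 1.
Proof.
move=> h; rewrite /sc.
have [->|n1] := eqVneq s 1; first by rewrite /= mulVf.
have [->|n2] := eqVneq s (-1); first by rewrite /= mulfV.
have -> : (- s == 1) = false by apply/negbTE; rewrite -eqr_opp opprK.
have -> : (- s == -1) = false by apply/negbTE; rewrite eqr_opp.
by rewrite mulr1.
Qed.

Definition P (k : closedFieldType) (n : nat) (s : int) : {mpoly k[(2 * n).+2]} :=
  if s == 1 then 'X_(inord 0) else if s == -1 then 'X_(inord 1) else 1.

Definition fmap (k : closedFieldType) (n : nat) (s : nat -> int) : lmap k n :=
  ('X_(inord 1),
   ([tuple @P k n (s j) * 'X_(inord (j + 2)) | j < n],
    [tuple @P k n (- s j) * 'X_(inord (n + 2 + j)) | j < n])).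

Lemma evalP (k : closedFieldType) (n : nat) (s : int) (p : pt k n) :
  (@P k n s).@[coordv p] = sc s p.1.
Proof.
rewrite /P /sc; case: (s == 1); first by rewrite mevalXU /coordv inordK.
case: (s == -1); first by rewrite mevalXU /coordv inordK.
by rewrite meval1.
Qed.

Lemma app1 (k : closedFieldType) (n : nat) s (p : pt k n) : (app (@fmap k n s) p).1 = p.1.
Proof. by rewrite /app /= mevalXU /coordv inordK. Qed.

Lemma app2 (k : closedFieldType) (n : nat) s (p : pt k n) j :
  (app (@fmap k n s) p).2.1`_j = sc (s j) p.1 * p.2.1`_j.
Proof.
case: (boolP (j < n)%N) => hj; last first.
  by rewrite !nth_default ?mulr0 ?size_tuple ?size_map ?size_tuple // leqNgt.
rewrite /app /= (nth_map 0); last by rewrite size_map size_enum_ord.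
rewrite (nth_map (Ordinal hj)); last by rewrite size_enum_ord.
have -> : nth (Ordinal hj) (enum 'I_n) j = Ordinal hj by apply: val_inj; rewrite /= nth_enum_ord.
rewrite mevalM evalP mevalXU /=.
congr (_ * _); rewrite /coordv inordK /=; last by rewrite addn2; lia.
by rewrite addn2 /= !ltnS hj subn2.
Qed.

Lemma app3 (k : closedFieldType) (n : nat) s (p : pt k n) j :
  (app (@fmap k n s) p).2.2`_j = sc (- s j) p.1 * p.2.2`_j.
Proof.
case: (boolP (j < n)%N) => hj; last first.
  by rewrite !nth_default ?mulr0 ?size_tuple ?size_map ?size_tuple // leqNgt.
rewrite /app /= (nth_map 0); last by rewrite size_map size_enum_ord.
rewrite (nth_map (Ordinal hj)); last by rewrite size_enum_ord.
have -> : nth (Ordinal hj) (enum 'I_n) j = Ordinal hj by apply: val_inj; rewrite /= nth_enum_ord.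
rewrite mevalM evalP mevalXU /=.
congr (_ * _); rewrite /coordv inordK /=; last by lia.
have -> : (n + 2 + j == 0)%N = false by lia.
have -> : (n + 2 + j == 1)%N = false by lia.
have -> : (n + 2 + j < n.+2)%N = false by lia.
by congr (_`_ _); lia.
Qed.

Lemma scN' (k : fieldType) (s : int) (al : k) : al != 0 -> sc (- s) al * sc s al = 1.
Proof. by move=> h; rewrite mulrC scN. Qed.

Definition aa (j : nat) : int := if odd j then (if odd j./2 then 1 else -1) else 0.

Lemma aa_step m : (odd m /\ aa m.+2 = - aa m) \/ (aa m = 0 /\ aa m.+2 = 0).
Proof.
rewrite /aa /=; rewrite negbK.
by case: (odd m); [left; case: (odd m./2) | right].
Qed.

Lemma scprod (k : fieldType) (s1 s2 : int) (al : k) : al != 0 ->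
  (s2 = - s1 \/ (s1 = 0 /\ s2 = 0)) -> sc s1 al * sc s2 al = 1.
Proof.
move=> h [->|[-> ->]]; first exact: scN.
by rewrite /sc /= mulr1.
Qed.

Lemma sc0 (k : fieldType) (al : k) : sc 0 al = 1.
Proof. by rewrite /sc. Qed.

Lemma aa_even j : ~~ odd j -> aa j = 0.
Proof. by rewrite /aa => /negbTE ->. Qed.

Lemma even_pred2 n : (1 <= n)%N -> ~~ odd n -> ~~ odd n.-2.
Proof. by case: n => [|[|m]] //=; rewrite negbK. Qed.

Lemma pt_eq (k : closedFieldType) (n : nat) (p q : pt k n) :
  p.1 = q.1 -> (forall j, p.2.1`_j = q.2.1`_j) -> (forall j, p.2.2`_j = q.2.2`_j) -> p = q.
Proof.
case: p => a [x x']; case: q => b [y y'] /= -> h1 h2.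
have -> : x = y by apply: val_inj; apply: (@eq_from_nth _ 0); rewrite ?size_tuple // => j _; apply: h1.
have -> : x' = y' by apply: val_inj; apply: (@eq_from_nth _ 0); rewrite ?size_tuple // => j _; apply: h2.
by [].
Qed.

Theorem mainTheorem9 (k : closedFieldType) (n : nat) :
  (1 <= n)%N -> ~~ odd n -> var_iso (@Y_An k n) (@X1_Gm k n).
Proof.
move=> hn hev.
have hl : aa n.-2 = 0 by apply: aa_even; apply: even_pred2.
have mid : forall i, (1 <= i)%N -> (aa i.+1 = - aa i.-1 \/ (aa i.-1 = 0 /\ aa i.+1 = 0)).
  by case=> // m _; case: (aa_step m) => [[_ ->]|]; [left|right].
have midN : forall i, (1 <= i)%N -> (- aa i.+1 = - - aa i.-1 \/ (- aa i.-1 = 0 /\ - aa i.+1 = 0)).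
  move=> i /mid [->|[-> ->]]; [by left | by right].
exists (@fmap k n aa), (@fmap k n (fun j => - aa j)); split.
- move=> p [hal [e1 e2 e3]]; split; first by rewrite app1.
  split.
  + rewrite !app2 !app3; by rewrite mulrACA scN // mul1r e1 mul1r /sc /aa /=.
  + move=> i h1 h2; rewrite !app2 !app3 mulrACA scN // mul1r e2 // mulrACA scprod ?mul1r //.
    exact: mid.
  + by rewrite !app2 !app3 mulrACA scN // mul1r e3 hl sc0 mul1r.
- move=> p [ht [e1 e2 e3]]; split; first by rewrite app1.
  split.
  + rewrite !app2 !app3 ?app1 mulrACA ?opprK ?scN ?scN' ?mul1r // e1 mul1r; congr (_ + _).
    by rewrite /sc /aa /= mulrA mulfV // mul1r.
  + move=> i h1 h2; rewrite !app2 !app3 ?app1 mulrACA ?opprK ?scN ?scN' ?mul1r // e2 // mulrACA scprod ?mul1r //.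
    exact: midN.
  + by rewrite !app2 !app3 ?app1 mulrACA ?opprK ?scN ?scN' ?mul1r // e3 hl oppr0 sc0 mul1r.
- move=> p [hal _]; apply: pt_eq => [|j|j]; rewrite ?app1 ?app2 ?app3 ?app1 //.
  + by rewrite mulrA ?opprK ?scN ?scN' ?mul1r.
  + by rewrite mulrA ?opprK ?scN ?scN' ?mul1r.
- move=> p [ht _]; apply: pt_eq => [|j|j]; rewrite ?app1 ?app2 ?app3 ?app1 //.
  + by rewrite mulrA ?opprK ?scN ?scN' ?mul1r.
  + by rewrite mulrA ?opprK ?scN ?scN' ?mul1r.
Qed.
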